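(* For all $s\in\mathbb Z_+$ and $\gamma\in[0,1]$, \[ \Big\|\mathrm{diag}\big(Q\,\mathrm{diag}(Q^s)J\big)-\frac{\mathrm{tr}(Q^s)}{N^2}I\Big\|\le\Big\|\frac1N\mathrm{diag}(Q^s)-\frac{\mathrm{tr}(Q^s)}{N^2}I\Big\|\le\min\left\{\frac{4\min_{x\in E}[N-\#\mathcal R^\gamma_Q(x,s)]}{N}+\gamma,\ \frac{2\,\mathrm{tr}(|Q|^s;Q<1)}{N}\right\}. \]
   Context: $E$ is a finite set with $N=\#E>8$ elements, listed in a fixed order; $Q$ is an irreducible stochastic matrix on $E$ with $Q(x,y)=Q(y,x)$ for all $x,y$ and $\mathrm{tr}(Q)=0$. $I$ is the identity, $J$ the matrix with all entries $1/N$, $\mathrm{diag}(C)$ the diagonal matrix with the same diagonal as $C$. $\|C\|=\sum_{x,y\in E}|C(x,y)|$. $\mathcal R^\gamma_Q(x,s)=\{y\in E:|Q^s(x,x)-Q^s(y,y)|\le\gamma\}$. For a function $f$ on $[-1,1]$ and $A\subseteq\mathbb R$, $\mathrm{tr}(f(Q);Q\in A)=\mathrm{tr}(f(Q)\mathbf 1_A(Q))=\sum_{q\in A}f(q)$ over eigenvalues $q$ of $Q$ with multiplicity; in particular $\mathrm{tr}(|Q|^s;Q<1)=\sum_{q<1}|q|^s$. *)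

(* Defs.v *)
(* Reals are modelled by an arbitrary real closed field R. *)
From HB Require Import structures.
From mathcomp Require Import all_boot all_order all_algebra.
From Stdlib Require Import ClassicalEpsilon.
Set Implicit Arguments. Unset Strict Implicit. Unset Printing Implicit Defensive.
Import Order.TTheory GRing.Theory Num.Theory.
Local Open Scope ring_scope.

(* E = 'I_N (fixed order); matrices on E are 'M[R]_N. *)

Definition stochastic (R : rcfType) (N : nat) (Q : 'M[R]_N) : Prop :=
  (forall x y, 0 <= Q x y) /\ (forall x, \sum_y Q x y = 1).

Definition irreducible_mx (R : rcfType) (N : nat) (Q : 'M[R]_N) : Prop :=
  forall x y, exists n : nat, 0 < (Q ^+ n) x y.

Definition Jmx (R : rcfType) (N : nat) : 'M[R]_N := const_mx (N%:R^-1).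

Definition diagm (R : rcfType) (N : nat) (C : 'M[R]_N) : 'M[R]_N :=
  \matrix_(i, j) ((i == j)%:R * C i i).

Definition mnorm (R : rcfType) (N : nat) (C : 'M[R]_N) : R :=
  \sum_x \sum_y `|C x y|.

Definition Rset (R : rcfType) (N : nat) (Q : 'M[R]_N) (gamma : R) (x : 'I_N) (s : nat)
  : {set 'I_N} :=
  [set y | `|(Q ^+ s) x x - (Q ^+ s) y y| <= gamma].

(* eigenvalues with multiplicity: the roots (with multiplicity) of the
   characteristic polynomial, chosen so that char_poly A = prod (X - q)
   (this factorization exists for real symmetric matrices). *)
Definition eigseq (R : rcfType) (N : nat) (A : 'M[R]_N) : seq R :=
  epsilon (inhabits [::])
    (fun r : seq R => char_poly A = \prod_(z <- r) ('X - z%:P)).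

Definition spec_tr (R : rcfType) (N : nat) (A : 'M[R]_N) (f : R -> R) (P : pred R) : R :=
  \sum_(q <- eigseq A | P q) f q.

(* Main.v *)
Require Import Defs.
From HB Require Import structures.
From mathcomp Require Import all_boot all_order all_algebra.
From mathcomp Require Import lra ring.
From mathcomp Require Import complex spectral sesquilinear.
From Stdlib Require Import ClassicalEpsilon.
Import Order.TTheory GRing.Theory Num.Theory.
Local Open Scope ring_scope.

Lemma stoch_pow (R : rcfType) N (Q : 'M[R]_N) : stochastic Q -> forall k, stochastic (Q ^+ k).
Proof.
move=> [H0 H1]; elim=> [|k [IH0 IH1]].
  rewrite expr0; split=> [x y|x]; first by rewrite !mxE ler0n.
  rewrite (bigD1 x) //= big1 => [|y yx]; first by rewrite !mxE eqxx addr0.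
  by rewrite !mxE eq_sym (negbTE yx).
rewrite exprS -mulmxE; split=> [x y|x].
  by rewrite mxE; apply: sumr_ge0 => z _; apply: mulr_ge0.
under eq_bigr do rewrite mxE.
rewrite exchange_big /= -(H1 x); apply: eq_bigr => z _.
by rewrite -mulr_sumr IH1 mulr1.
Qed.

Lemma sum_delta (R : rcfType) N (f g : 'I_N -> R) z :
  \sum_t f t * ((t == z)%:R * g t) = f z * g z.
Proof.
rewrite (bigD1 z) //= big1 => [|t tz]; first by rewrite eqxx mul1r addr0.
by rewrite (negbTE tz) mul0r mulr0.
Qed.

Lemma mnorm_diag (R : rcfType) N (M : 'M[R]_N) (g : 'I_N -> R) :
  (forall x y, M x y = (x == y)%:R * g x) -> mnorm M = \sum_x `|g x|.
Proof.
move=> H; rewrite /mnorm; apply: eq_bigr => x _.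
rewrite (bigD1 x) //= big1 => [|y yx]; first by rewrite H eqxx mul1r addr0.
by rewrite H eq_sym (negbTE yx) mul0r normr0.
Qed.

Lemma sum_prod (R : rcfType) N (f g : 'I_N -> R) :
  \sum_x \sum_y f x * g y = (\sum_x f x) * (\sum_y g y).
Proof. by rewrite mulr_suml; apply: eq_bigr => x _; rewrite mulr_sumr. Qed.

Lemma sum_ind (R : rcfType) N (A : {set 'I_N}) :
  \sum_x (x \in A)%:R = #|A|%:R :> R.
Proof.
rewrite (bigID (mem A)) /= [X in _ + X]big1 => [|x /negbTE -> //].
by rewrite addr0 (eq_bigr (fun _ => 1)) => [|x ->//]; rewrite sumr_const.
Qed.

Lemma pair_bound (R : rcfType) N (a : 'I_N -> R) (A : {set 'I_N}) x0 (gamma : R) :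
  (forall x, 0 <= a x <= 1) -> 0 <= gamma ->
  (forall y, y \in A -> `|a x0 - a y| <= gamma) ->
  \sum_x \sum_y `|a x - a y| <= N%:R ^+ 2 * gamma + 2 * N%:R * (N - #|A|)%:R.
Proof.
move=> ha hg hA.
pose chi y : R := (y \in A)%:R.
pose n : R := #|A|%:R.
have hAN : (#|A| <= N)%N by rewrite -[X in (_ <= X)%N]card_ord max_card.
have hn : n <= N%:R by rewrite ler_nat.
have hchi : \sum_x chi x = n by exact: sum_ind.
have step1 : \sum_x \sum_y `|a x - a y| <=
   \sum_x \sum_y (chi x * chi y * `|a x - a y|) + \sum_x \sum_y (1 - chi x * chi y).
  rewrite -big_split /=; apply: ler_sum => x _; rewrite -big_split /=.
  apply: ler_sum => y _; rewrite /chi.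
  case: (x \in A); case: (y \in A); rewrite /= ?mul1r ?mul0r ?subr0 ?subrr ?addr0 ?add0r //;
  have := ha x; have := ha y; case/andP=> ? ? /andP[? ?];
  rewrite ler_norml; apply/andP; split; lra.
have step2 : \sum_x \sum_y (1 - chi x * chi y) = N%:R ^+ 2 - n ^+ 2.
  under eq_bigr do rewrite sumrB.
  rewrite sumrB sum_prod hchi.
  rewrite (eq_bigr (fun _ => N%:R)) => [|x _]; last by rewrite sumr_const card_ord.
  rewrite sumr_const card_ord -mulr_natl; ring.
have step3 : \sum_x \sum_y (chi x * chi y * `|a x - a y|) <= n ^+ 2 * gamma.
  have hA' : forall y, y \in A -> a x0 - gamma <= a y <= a x0 + gamma.
    by move=> y /hA; rewrite ler_norml => /andP[? ?]; apply/andP; split; lra.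
  case: (eqVneq gamma 0) => [g0|gne0].
    rewrite g0 mulr0; apply: le_trans (_ : \sum_(x : 'I_N) \sum_(y : 'I_N) (0:R) <= 0).
      apply: ler_sum => x _; apply: ler_sum => y _; rewrite /chi.
      case xA: (x \in A); case yA: (y \in A); rewrite /= ?mul1r ?mul0r //.
      have := hA' x xA; have := hA' y yA; rewrite g0 => /andP[? ?] /andP[? ?].
      have -> : a x - a y = 0 by lra.
      by rewrite normr0.
    by rewrite big1 // => x _; rewrite big1.
  have gpos : 0 < gamma by rewrite lt_def gne0.
  pose w := 2 * gamma.
  pose u y := a y - (a x0 - gamma).
  pose f y := chi y * u y.
  pose S := \sum_y f y.
  have key : w * \sum_x \sum_y (chi x * chi y * `|a x - a y|) <=
     \sum_x \sum_y ((w * f x) * chi y + (w * chi x) * f y - (2 * f x) * f y).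
    rewrite mulr_sumr; apply: ler_sum => x _; rewrite mulr_sumr; apply: ler_sum => y _.
    rewrite /f /chi.
    case xA: (x \in A); case yA: (y \in A); rewrite /=;
      try (by rewrite !(mul0r, mulr0, mul1r, mulr1, add0r, addr0, subrr, oppr0, subr0)).
    have := hA' x xA; have := hA' y yA; rewrite /u /w => /andP[? ?] /andP[? ?].
    case: (lerP (a y) (a x)) => hxy; nra.
  have E : \sum_x \sum_y ((w * f x) * chi y + (w * chi x) * f y - (2 * f x) * f y)
       = w * S * n + w * n * S - 2 * S * S.
    under eq_bigr do rewrite sumrB big_split /=.
    rewrite sumrB big_split /= !sum_prod hchi -!mulr_sumr.
    by rewrite hchi.
  rewrite E in key.
  have key2 : w * \sum_x \sum_y (chi x * chi y * `|a x - a y|) <= w * (n ^+ 2 * gamma).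
    apply: le_trans key _; have := sqr_ge0 (gamma * n - S); rewrite /w; nra.
  by rewrite ler_pM2l in key2 => //; rewrite /w; lra.
have hn0 : 0 <= n by rewrite ler0n.
rewrite natrB // -/n.
apply: le_trans step1 _; rewrite step2.
have h1 : 0 <= (N%:R - n) * (N%:R + n) * gamma.
  by apply: mulr_ge0 => //; apply: mulr_ge0; lra.
have h2 : 0 <= (N%:R - n) * (N%:R - n) by apply: mulr_ge0; lra.
nra.
Qed.

Lemma dev_pair (R : rcfType) N (a : 'I_N -> R) :
  \sum_x `|N%:R * a x - \sum_y a y| <= \sum_x \sum_y `|a x - a y|.
Proof.
apply: ler_sum => x _.
have -> : N%:R * a x - \sum_y a y = \sum_y (a x - a y).
  by rewrite sumrB sumr_const card_ord mulr_natl.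
exact: ler_norm_sum.
Qed.

Lemma spec_bound (R : rcfType) N (a r : 'I_N -> R) (W : 'I_N -> 'I_N -> R) s :
  (forall i x, 0 <= W i x) -> (forall i, \sum_x W i x = 1) ->
  (forall x, a x = \sum_i W i x * r i ^+ s) -> (forall i, r i <= 1) ->
  (forall i, r i = 1 -> forall x, N%:R * W i x = 1) ->
  \sum_x `|N%:R * a x - \sum_y a y| <= 2 * N%:R * \sum_(i | r i < 1) `|r i| ^+ s.
Proof.
move=> W0 W1 ha r1 hr1.
have tr : \sum_y a y = \sum_i r i ^+ s.
  under eq_bigr do rewrite ha.
  rewrite exchange_big /=; apply: eq_bigr => i _.
  by rewrite -mulr_suml W1 mul1r.
have E : forall x, N%:R * a x - \sum_y a y =
    \sum_(i | r i < 1) r i ^+ s * (N%:R * W i x - 1).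
  move=> x; rewrite tr ha mulr_sumr -sumrB.
  rewrite [RHS]big_mkcond /=; apply: eq_bigr => i _.
  case: ifP => hi; first by ring.
  have ri1 : r i = 1 by have := r1 i; rewrite le_eqVlt hi orbF => /eqP.
  have hw := hr1 i ri1 x.
  by rewrite ri1 expr1n mulr1 hw subrr.
under eq_bigr do rewrite E.
apply: le_trans (_ : \sum_x \sum_(i | r i < 1) `|r i| ^+ s * (N%:R * W i x + 1) <= _).
  apply: ler_sum => x _; apply: le_trans (ler_norm_sum _ _ _) _.
  apply: ler_sum => i _; rewrite normrM normrX ler_wpM2l ?exprn_ge0 //.
  apply: le_trans (ler_normB _ _) _; rewrite normr1 ger0_norm //.
  by apply: mulr_ge0.
rewrite exchange_big /= mulr_sumr; apply: ler_sum => i _.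
rewrite -mulr_sumr big_split /= -mulr_sumr W1 sumr_const card_ord mulr_natl.
have := exprn_ge0 s (normr_ge0 (r i)); lra.
Qed.

Lemma eig_le1 (R : rcfType) N (Q : 'M[R]_N) (u : 'I_N -> R) (l : R) x0 :
  stochastic Q -> (forall x, \sum_y Q x y * u y = l * u x) -> u x0 != 0 -> l <= 1.
Proof.
move=> [H0 H1] hu ux0.
have [x _ hmax] := @real_arg_maxP _ _ x0 xpredT (fun y => `|u y|) erefl
   (fun _ _ => normr_real _).
have hx : 0 < `|u x| by apply: lt_le_trans (hmax x0 erefl); rewrite normr_gt0.
have : `|l| * `|u x| <= 1 * `|u x|.
  rewrite -normrM -hu -(H1 x) mulr_suml; apply: le_trans (ler_norm_sum _ _ _) _.
  apply: ler_sum => y _; rewrite normrM ger0_norm //; apply: ler_wpM2l => //.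
  exact: hmax.
rewrite ler_pM2r // => hl; apply: le_trans hl; exact: ler_norm.
Qed.

Lemma pow_fix (R : rcfType) N (Q : 'M[R]_N) (u : 'I_N -> R) :
  (forall x, \sum_y Q x y * u y = u x) -> forall n x, \sum_y (Q ^+ n) x y * u y = u x.
Proof.
move=> hu; elim=> [|n IH] x.
  rewrite expr0 (bigD1 x) //= big1 => [|y yx]; first by rewrite !mxE eqxx mul1r addr0.
  by rewrite !mxE eq_sym (negbTE yx) mul0r.
rewrite exprS -mulmxE.
under eq_bigr do rewrite mxE mulr_suml.
rewrite exchange_big /= -(hu x); apply: eq_bigr => z _.
by under eq_bigr do rewrite -mulrA; rewrite -mulr_sumr IH.
Qed.

Lemma eig1_const (R : rcfType) N (Q : 'M[R]_N) (u : 'I_N -> R) :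
  stochastic Q -> irreducible_mx Q -> (forall x, \sum_y Q x y * u y = u x) ->
  forall y z, u y = u z.
Proof.
move=> hs hirr hu.
suff hc : forall x0 : 'I_N, exists x, forall y, u y = u x.
  move=> y z; have [x hx] := hc y; by rewrite (hx y) (hx z).
move=> x0.
have [x _ hmax] := @real_arg_maxP _ _ x0 xpredT u erefl (fun _ _ => num_real _).
exists x => y.
have [n hn] := hirr x y.
have [H0 H1] := @stoch_pow _ _ _ hs n.
have hsum : \sum_z (Q ^+ n) x z * (u x - u z) = 0.
  under eq_bigr do rewrite mulrBr.
  by rewrite sumrB -mulr_suml H1 mul1r (@pow_fix _ _ _ u hu) subrr.
have := hsum; rewrite (bigD1 y) //= => h.
have hrest : 0 <= \sum_(z | z != y) (Q ^+ n) x z * (u x - u z).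
  apply: sumr_ge0 => z _; apply: mulr_ge0 => //; rewrite subr_ge0; exact: hmax.
have hy : 0 <= (Q ^+ n) x y * (u x - u y).
  apply: mulr_ge0; [exact: H0| rewrite subr_ge0; exact: hmax].
have h0 : (Q ^+ n) x y * (u x - u y) = 0 by lra.
move/eqP: h0; rewrite mulf_eq0 (gt_eqF hn) /= subr_eq0 => /eqP ->; done.
Qed.

Lemma char_poly_sim (F : fieldType) n (A P P' : 'M[F]_n) :
  P' *m P = 1%:M -> char_poly (P' *m A *m P) = char_poly A.
Proof.
move=> hP; rewrite /char_poly /char_poly_mx.
have hPP : map_mx polyC P' *m map_mx polyC P = 1%:M.
  by rewrite -map_mxM hP map_mx1.
have -> : 'X%:M - map_mx polyC (P' *m A *m P) =
   map_mx polyC P' *m ('X%:M - map_mx polyC A) *m map_mx polyC P.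
  rewrite mulmxBr mulmxBl !map_mxM mul_mx_scalar -scalemxAl hPP.
  by rewrite scale_scalar_mx mulr1.
by rewrite !det_mulmx mulrAC -det_mulmx hPP det1 mul1r.
Qed.

Section CX.
Variable R : rcfType.
Local Notation toC := (real_complex R).
Local Notation cRe := (@complex.Re R).
Local Notation cIm := (@complex.Im R).

Lemma Re_add (x y : R[i]) : cRe (x + y) = cRe x + cRe y.
Proof. by case: x => a b; case: y. Qed.
Lemma Im_add (x y : R[i]) : cIm (x + y) = cIm x + cIm y.
Proof. by case: x => a b; case: y. Qed.
Lemma Re_sum (I : finType) (F : I -> R[i]) : cRe (\sum_i F i) = \sum_i cRe (F i).
Proof. by elim/big_rec2: _ => // i y1 y2 _ <-; rewrite Re_add. Qed.
Lemma Im_sum (I : finType) (F : I -> R[i]) : cIm (\sum_i F i) = \sum_i cIm (F i).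
Proof. by elim/big_rec2: _ => // i y1 y2 _ <-; rewrite Im_add. Qed.
Lemma Re_mulR (z : R[i]) q : cRe (z * toC q) = cRe z * q.
Proof. case: z => a b /=; ring. Qed.
Lemma Im_mulR (z : R[i]) q : cIm (z * toC q) = cIm z * q.
Proof. case: z => a b /=; ring. Qed.
Lemma Re_Rmul (z : R[i]) q : cRe (toC q * z) = q * cRe z.
Proof. case: z => a b /=; ring. Qed.
Lemma Im_Rmul (z : R[i]) q : cIm (toC q * z) = q * cIm z.
Proof. case: z => a b /=; ring. Qed.
Lemma mulJ (z : R[i]) : z * Num.conj z = toC (cRe z ^+ 2 + cIm z ^+ 2).
Proof. case: z => a b; apply/eqP; rewrite eq_complex /=; apply/andP; split; apply/eqP; ring. Qed.
End CX.

Section SpecDecomp.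
Local Open Scope sesquilinear_scope.

Lemma spec_decomp (R : rcfType) N (Q : 'M[R]_N) : Q^T = Q ->
 exists (r : 'I_N -> R) (W u1 u2 : 'I_N -> 'I_N -> R),
  [/\ forall i x, W i x = u1 i x ^+ 2 + u2 i x ^+ 2,
      forall i, \sum_x W i x = 1,
      forall k x, (Q ^+ k) x x = \sum_i W i x * r i ^+ k,
      forall i x, \sum_y Q x y * u1 i y = r i * u1 i x /\
                  \sum_y Q x y * u2 i y = r i * u2 i x &
      char_poly Q = \prod_i ('X - (r i)%:P)].
Proof.
move=> Hsym.
have Hs : forall i j, Q i j = Q j i by move=> i j; rewrite -{1}Hsym mxE.
pose Qc := map_mx (real_complex R) Q.
have herm : Qc \is hermsymmx.
  apply/is_hermitianmxP; apply/matrixP => i j; rewrite !mxE expr0 mul1r.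
  by rewrite Hs; symmetry; exact: conjc_real.
pose P := spectralmx Qc; pose d := spectral_diag Qc.
have Pu : P \is unitarymx := spectral_unitarymx Qc.
have Qeq : Qc = P^t* *m diag_mx d *m P.
  rewrite -invmx_unitary //; exact: (orthomx_spectralP (hermitian_normalmx herm)).
have PP' : P *m P^t* = 1%:M by apply/unitarymxP.
have P'P : P^t* *m P = 1%:M by have := mulmxKtV (1%:M) Pu erefl; rewrite mul1mx.
have dreal : forall i, d 0 i \is Num.real.
  by move=> i; apply: (mxOverP (hermitian_spectral_diag_real herm)).
pose r i := complex.Re (d 0 i).
have dr : forall i, d 0 i = (real_complex R) (r i) by move=> i; rewrite /r RRe_real.
pose u1 i x := complex.Re (P i x).
pose u2 i x := complex.Im (P i x).
pose W i x := u1 i x ^+ 2 + u2 i x ^+ 2.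
have PJ : forall i x, P i x * Num.conj (P i x) = (real_complex R) (W i x) by move=> i x; exact: mulJ.
exists r, W, u1, u2; split => //.
- move=> i; apply: (@complexI R); rewrite rmorph_sum rmorph1 /=.
  have := congr1 (fun M : 'M_N => M i i) PP'; rewrite !mxE eqxx mulr1n => <-.
  by apply: eq_bigr => x _; rewrite !mxE -PJ.
- have pw : forall k, map_mx (real_complex R) (Q ^+ k) = P^t* *m diag_mx (\row_i (d 0 i ^+ k)) *m P.
    elim=> [|k IH].
      rewrite expr0 map_mx1.
      have -> : diag_mx (\row_i (d 0 i ^+ 0)) = 1%:M.
        by apply/matrixP => i j; rewrite !mxE expr0.
      by rewrite mulmx1 P'P.
    rewrite exprSr -mulmxE map_mxM IH -/Qc Qeq.
    rewrite -!mulmxA (mulmxA P) PP' mul1mx (mulmxA (diag_mx _)) mulmx_diag.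
    congr (_ *m (_ *m _)); apply/matrixP => i j; rewrite !mxE exprSr //.
  move=> k x; apply: (@complexI R); rewrite rmorph_sum /=.
  have := congr1 (fun M : 'M_N => M x x) (pw k); rewrite mxE /= => ->.
  rewrite mxE; apply: eq_bigr => i _.
  rewrite mul_mx_diag !mxE rmorphM rmorphXn /= -dr -PJ; ring.
- have PD : P *m Qc = diag_mx d *m P by rewrite Qeq !mulmxA PP' mul1mx.
  move=> i x.
  have E := congr1 (fun M : 'M_N => M i x) PD; rewrite /= mul_diag_mx !mxE dr in E.
  have E' : \sum_y P i y * real_complex R (Q x y) = real_complex R (r i) * P i x.
    by rewrite -E; apply: eq_bigr => y _; rewrite !mxE Hs.
  split.
    have := congr1 (@complex.Re R) E'; rewrite Re_sum Re_Rmul => <-.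
    by apply: eq_bigr => y _; rewrite Re_mulR mulrC.
  have := congr1 (@complex.Im R) E'; rewrite Im_sum Im_Rmul => <-.
  by apply: eq_bigr => y _; rewrite Im_mulR mulrC.
- apply: (@map_poly_inj _ _ (real_complex R)).
  rewrite map_char_poly -/Qc Qeq char_poly_sim // char_poly_trig ?diag_mx_is_trig //.
  rewrite rmorph_prod; apply: eq_bigr => i _.
  by rewrite mxE eqxx mulr1n dr /= map_polyXsubC.
Qed.
End SpecDecomp.

Lemma eigseq_perm (R : rcfType) N (Q : 'M[R]_N) (r : 'I_N -> R) :
  char_poly Q = \prod_i ('X - (r i)%:P) ->
  perm_eq (eigseq Q) [seq r i | i <- index_enum 'I_N].
Proof.
move=> hc.
have ex : exists s, char_poly Q = \prod_(z <- s) ('X - z%:P).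
  by exists [seq r i | i <- index_enum 'I_N]; rewrite big_map.
have := epsilon_spec (inhabits [::]) _ ex; rewrite -/(eigseq Q) => he.
apply: prod_XsubC_eq; rewrite -he hc big_map //.
Qed.

Theorem lemma4p8 (R : rcfType) (N : nat) (HN : (8 < N)%N) (Q : 'M[R]_N)
  (Hsym : Q^T = Q) (Hsto : stochastic Q) (Hirr : irreducible_mx Q)
  (Htr : \tr Q = 0) (s : nat) (gamma : R) (Hg0 : 0 <= gamma) (Hg1 : gamma <= 1) :
  let Qs := Q ^+ s in
  let c := \tr Qs / (N%:R ^+ 2) in
  mnorm (diagm (Q *m diagm Qs *m Jmx R N) - c *: 1%:M)
    <= mnorm (N%:R^-1 *: diagm Qs - c *: 1%:M)
  /\
  mnorm (N%:R^-1 *: diagm Qs - c *: 1%:M)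
    <= Num.min
         (4 * (\big[minn/N]_(x : 'I_N) (N - #|Rset Q gamma x s|)%N)%:R / N%:R + gamma)
         (2 * spec_tr Q (fun q => `|q| ^+ s) (fun q => q < 1) / N%:R).
Proof.
move=> Qs c.
have Hs : forall i j, Q i j = Q j i by move=> i j; rewrite -{1}Hsym mxE.
have [H0 H1] := Hsto.
have [Qs0 Qs1] : stochastic Qs := @stoch_pow _ _ _ Hsto s.
pose a x := Qs x x.
have ha : forall x, 0 <= a x <= 1.
  move=> x; rewrite Qs0 /= -(Qs1 x) (bigD1 x) //= lerDl.
  by apply: sumr_ge0 => y _; exact: Qs0.
have Npos : 0 < N%:R :> R by rewrite ltr0n; apply: leq_ltn_trans HN.
have N0 : N%:R != 0 :> R by rewrite gt_eqF.
have N2pos : 0 < N%:R ^+ 2 :> R by rewrite exprn_gt0.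
have hR : mnorm (N%:R^-1 *: diagm Qs - c *: 1%:M) = \sum_x `|N%:R^-1 * a x - c|.
  apply: mnorm_diag => x y; rewrite !mxE /a; ring.
have htr : \tr Qs = \sum_y a y by [].
have hkey : N%:R ^+ 2 * \sum_x `|N%:R^-1 * a x - c| =
            \sum_x `|N%:R * a x - \sum_y a y|.
  rewrite mulr_sumr; apply: eq_bigr => x _.
  rewrite -[X in X * _]ger0_norm ?exprn_ge0 ?ler0n // -normrM; congr `|_|.
  rewrite /c htr; field; done.
have hpair : \sum_x `|N%:R * a x - \sum_y a y| <= N%:R ^+ 2.
  apply: le_trans (@dev_pair _ _ a) _.
  apply: le_trans (_ : \sum_(x : 'I_N) \sum_(y : 'I_N) (1:R) <= _).
    apply: ler_sum => x _; apply: ler_sum => y _.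
    have := ha x; have := ha y; case/andP=> ? ? /andP[? ?].
    rewrite ler_norml; apply/andP; split; lra.
  by rewrite !sumr_const card_ord -[N%:R *+ N]mulr_natr expr2.
split.
  rewrite hR.
  have hL : mnorm (diagm (Q *m diagm Qs *m Jmx R N) - c *: 1%:M) =
     \sum_x `|\sum_z Q x z * (N%:R^-1 * a z - c)|.
    apply: mnorm_diag => x y; rewrite !mxE.
    have -> : \sum_j (Q *m diagm Qs) x j * Jmx R N j x = \sum_z Q x z * (N%:R^-1 * a z).
      apply: eq_bigr => z _; rewrite !mxE /diagm; under eq_bigr do rewrite mxE.
      rewrite sum_delta /a; ring.
    have E : \sum_z Q x z * (N%:R^-1 * a z - c) =
             \sum_z Q x z * (N%:R^-1 * a z) - c.
      under eq_bigr do rewrite mulrBr.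
      by rewrite sumrB -mulr_suml H1 mul1r.
    rewrite E; ring.
  rewrite hL.
  apply: le_trans (_ : \sum_x \sum_z Q x z * `|N%:R^-1 * a z - c| <= _).
    apply: ler_sum => x _; apply: le_trans (ler_norm_sum _ _ _) _.
    by apply: ler_sum => z _; rewrite normrM ger0_norm.
  rewrite exchange_big /=; apply: ler_sum => z _.
  by rewrite -mulr_suml (eq_bigr (fun x => Q z x)) ?H1 ?mul1r // => x _; rewrite Hs.
rewrite le_min; apply/andP; split.
  pose B m := \sum_x `|N%:R^-1 * a x - c| <= 4 * m%:R / N%:R + gamma.
  rewrite hR; apply: (big_ind B).
  - rewrite /B -(ler_pM2l N2pos) hkey.
    apply: le_trans hpair _.
    have -> : N%:R ^+ 2 * (4 * N%:R / N%:R + gamma) = 4 * N%:R ^+ 2 + N%:R ^+ 2 * gamma.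
      by field.
    have := exprn_ge0 2 (ltW Npos); nra.
  - move=> m1 m2 h1 h2.
    by rewrite /minn; case: ifP.
  - move=> x _; rewrite /B -(ler_pM2l N2pos) hkey.
    apply: le_trans (@dev_pair _ _ a) _.
    have hp := @pair_bound _ _ a (Rset Q gamma x s) x gamma ha Hg0.
    have hk : 0 <= ((N - #|Rset Q gamma x s|)%N)%:R :> R by rewrite ler0n.
    apply: le_trans (hp _) _.
      by move=> y; rewrite inE.
    have -> : N%:R ^+ 2 * (4 * ((N - #|Rset Q gamma x s|)%N)%:R / N%:R + gamma) =
       4 * N%:R * ((N - #|Rset Q gamma x s|)%N)%:R + N%:R ^+ 2 * gamma by field.
    have := mulr_ge0 (ltW Npos) hk; nra.
have [r [W [u1 [u2 [hW hW1 hpow heig hchar]]]]] := @spec_decomp _ _ _ Hsym.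
have hspec : spec_tr Q (fun q => `|q| ^+ s) (fun q => q < 1) =
             \sum_(i | r i < 1) `|r i| ^+ s.
  by rewrite /spec_tr (perm_big _ (@eigseq_perm _ _ _ _ hchar)) big_map.
have W0 : forall i x, 0 <= W i x.
  by move=> i x; rewrite hW; apply: addr_ge0; apply: sqr_ge0.
have r1 : forall i, r i <= 1.
  move=> i.
  have [x0 hx0] : exists x0, (u1 i x0 != 0) || (u2 i x0 != 0).
    apply/existsP; apply: contraT; rewrite negb_exists => /forallP hall.
    have : \sum_x W i x = 0.
      apply: big1 => x _; have := hall x; rewrite negb_or !negbK => /andP[/eqP e1 /eqP e2].
      by rewrite hW e1 e2 expr0n add0r.
    by rewrite hW1 => /eqP; rewrite oner_eq0.
  case/orP: hx0 => hx0.
    by apply: (@eig_le1 _ _ Q (u1 i) (r i) x0 Hsto) => // x; case: (heig i x).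
  by apply: (@eig_le1 _ _ Q (u2 i) (r i) x0 Hsto) => // x; case: (heig i x).
have hr1 : forall i, r i = 1 -> forall x, N%:R * W i x = 1.
  move=> i ri x.
  have e1 : forall y, \sum_z Q y z * u1 i z = u1 i y.
    by move=> y; case: (heig i y) => -> _; rewrite ri mul1r.
  have e2 : forall y, \sum_z Q y z * u2 i z = u2 i y.
    by move=> y; case: (heig i y) => _ ->; rewrite ri mul1r.
  have c1 := @eig1_const _ _ Q (u1 i) Hsto Hirr e1.
  have c2 := @eig1_const _ _ Q (u2 i) Hsto Hirr e2.
  transitivity (\sum_y W i y); last exact: hW1.
  rewrite (eq_bigr (fun _ => W i x)) ?sumr_const ?card_ord ?mulr_natl //.
  by move=> y _; rewrite !hW (c1 y x) (c2 y x).
have hb := @spec_bound _ _ a r W s W0 hW1 (fun x => hpow s x) r1 hr1.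
rewrite hR hspec -(ler_pM2l N2pos) hkey.
apply: le_trans hb _.
have -> : N%:R ^+ 2 * (2 * (\sum_(i | r i < 1) `|r i| ^+ s) / N%:R) =
   2 * N%:R * \sum_(i | r i < 1) `|r i| ^+ s by field.
done.
Qed.
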